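(* For every Dirichlet character $\chi$ modulo $d\ge1$ one has $|A_\chi|\le1$, with equality if and only if $\chi$ is the principal character modulo $d$ (in which case $A_\chi=1$).
   Context: For a Dirichlet character $\chi$, $A_\chi=\prod_{p:\ \chi(p)\neq0}\Bigl(1+\frac{(\chi(p)-1)p}{(p^2-\chi(p))(p-1)}\Bigr)$, the product running over primes $p$ (it converges absolutely). *)

(* Defs.v *)
From HB Require Import structures.
From mathcomp Require Import all_boot all_order all_algebra.
From mathcomp Require Import all_classical all_reals all_analysis.
From mathcomp Require Import complex.
Set Implicit Arguments. Unset Strict Implicit. Unset Printing Implicit Defensive.
Import Order.TTheory GRing.Theory Num.Theory.
Import numFieldTopology.Exports numFieldNormedType.Exports.
Local Open Scope ring_scope.
Local Open Scope complex_scope.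
Local Open Scope classical_set_scope.

HB.instance Definition _ (R : rcfType) := PseudoPointedMetric.copy R[i] R[i]^o.
HB.instance Definition _ (R : rcfType) := NormedModule.copy R[i] R[i]^o.

Definition dirichlet_char (R : rcfType) (d : nat) (chi : nat -> R[i]) : Prop :=
  [/\ (forall n : nat, chi (n + d)%N = chi n),
      (forall m n : nat, chi (m * n)%N = chi m * chi n) &
      (forall n : nat, (chi n != 0) = coprime n d)].

Definition principal_char (R : rcfType) (d : nat) : nat -> R[i] :=
  fun n => if coprime n d then 1 else 0.

Definition euler_factor (R : rcfType) (chi : nat -> R[i]) (p : nat) : R[i] :=
  1 + (chi p - 1) * p%:R / ((p%:R ^+ 2 - chi p) * (p%:R - 1)).

Definition A_partial (R : rcfType) (chi : nat -> R[i]) (n : nat) : R[i] :=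
  \prod_(p < n | prime p && (chi p != 0)) euler_factor chi p.

Definition A_chi (R : realType) (chi : nat -> R[i]) : R[i] :=
  lim (A_partial chi @ \oo).

(* Main.v *)
Require Import Defs.
From HB Require Import structures.
From mathcomp Require Import all_boot all_order all_algebra.
From mathcomp Require Import all_classical all_reals all_analysis.
From mathcomp Require Import complex cyclic.
From mathcomp Require Import lra ring zify.
Import Order.TTheory GRing.Theory Num.Theory.
Import numFieldTopology.Exports numFieldNormedType.Exports.
Local Open Scope ring_scope.
Local Open Scope complex_scope.
Local Open Scope classical_set_scope.

Section S.
Variable R : realType.
Import Normc.

Lemma D_eq (a b : R) (p : nat) :
  (((p%:R : R[i]) ^+ 2 - (a +i* b)) * ((p%:R : R[i]) - 1)) =
  ((p%:R ^+ 3 - p%:R ^+ 2 - (p%:R - 1) * a) +i* (- ((p%:R - 1) * b))).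
Proof.
rewrite -(rmorph_nat (real_complex R)) expr2. simpc. apply/eqP; rewrite eq_complex /=; apply/andP; split; apply/eqP; ring.
Qed.

Lemma natC (p : nat) : (p%:R : R[i]) = (p%:R : R) +i* 0.
Proof. by rewrite -(rmorph_nat (real_complex R)). Qed.

Lemma sqrt_le (u t : R) : 0 <= t -> u <= t ^+ 2 -> Num.sqrt u <= t.
Proof.
move=> t0 ut; rewrite -(ger0_norm t0) -sqrtr_sqr; exact: ler_wsqrtr.
Qed.

Lemma le_sqrt (v t : R) : 0 <= t -> t ^+ 2 <= v -> t <= Num.sqrt v.
Proof.
move=> t0 ut; rewrite -(ger0_norm t0) -sqrtr_sqr; exact: ler_wsqrtr.
Qed.

Lemma ef_props (c : R[i]) (p : nat) : (1 < p)%N -> normc c = 1 ->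
  let e := 1 + (c - 1) * p%:R / ((p%:R ^+ 2 - c) * (p%:R - 1)) in
  [/\ normc e <= 1, (normc e = 1 -> c = 1) &
      normc (e - 1) <= 4 / ((p%:R : R) * (p%:R - 1))].
Proof.
move=> p1; case: c => a b /= hn.
have hs : a ^+ 2 + b ^+ 2 = 1.
  by rewrite -(sqr_sqrtr (addr_ge0 (sqr_ge0 a) (sqr_ge0 b))) hn expr1n.
have P2 : (2 : R) <= p%:R by rewrite (ler_nat R 2 p).
set P : R := p%:R in P2 *.
have ha : a <= 1 by nra.
rewrite D_eq -/P.
set Dc := ((P ^+ 3 - P ^+ 2 - (P - 1) * a) +i* (- ((P - 1) * b))).
have hD : normc Dc = Num.sqrt ((P^+3 - P^+2 - (P-1)*a)^+2 + ((P-1) * b)^+2).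
  by rewrite /Dc /= sqrrN.
have hDlb : (P^+2 - 1) * (P - 1) <= normc Dc.
  rewrite hD; apply: le_sqrt; first by nra.
  have -> : ((P - 1) * b) ^+ 2 = (P-1)^+2 * (1 - a^+2).
    by rewrite exprMn (_ : b ^+ 2 = 1 - a ^+ 2) //; lra.
  rewrite -subr_ge0.
  have -> : (P ^+ 3 - P ^+ 2 - (P - 1) * a) ^+ 2 + (P - 1) ^+ 2 * (1 - a ^+ 2) -
    ((P ^+ 2 - 1) * (P - 1)) ^+ 2 = ((P-1)^+2 * P^+2 * 2) * (1 - a) by ring.
  apply: mulr_ge0; last by lra.
  by rewrite !mulr_ge0 ?sqr_ge0 //; lra.
have Dpos : 0 < normc Dc.
  apply: (lt_le_trans _ hDlb); nra.
have Dnz : Dc != 0.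
  by apply/eqP => D0; move: Dpos; rewrite D0 normc0 ltxx.
set Nc := (P^+3 - P^+2 - P + a) +i* b.
have eN : 1 + (a +i* b - 1) * (P +i* 0) / Dc = Nc / Dc.
  apply: (mulIf Dnz); rewrite mulrDl !divfK // mul1r.
  rewrite /Dc /Nc; simpc; apply/eqP; rewrite eq_complex /=.
  by apply/andP; split; apply/eqP; ring.
rewrite natC -/P eN.
have hN : normc Nc = Num.sqrt ((P^+3 - P^+2 - P + a)^+2 + b^+2) by [].
have key : (P^+3 - P^+2 - (P-1)*a)^+2 + ((P-1) * b)^+2 -
           ((P^+3 - P^+2 - P + a)^+2 + b^+2) = 2 * (P^+4 - P^+3 - P) * (1 - a).
  have -> : ((P - 1) * b) ^+ 2 = (P-1)^+2 * (1 - a^+2).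
    by rewrite exprMn (_ : b ^+ 2 = 1 - a ^+ 2) //; lra.
  rewrite (_ : b ^+ 2 = 1 - a ^+ 2); last by lra.
  ring.
have Kpos : 0 < P^+4 - P^+3 - P by nra.
rewrite normcM normcV; split.
- rewrite ler_pdivrMr // mul1r hN hD ler_sqrt; last by rewrite addr_ge0 ?sqr_ge0.
  rewrite -subr_ge0 key; apply: mulr_ge0; [apply: mulr_ge0 => //; exact: ltW|lra].
- move=> h0; have /eqP : normc Nc = normc Dc.
    by rewrite -[normc Dc]mul1r -h0 divfK // gt_eqF.
  rewrite hN hD eqr_sqrt ?addr_ge0 ?sqr_ge0 //.
  rewrite eq_sym -subr_eq0 key => /eqP h.
  have a1 : a = 1.
    have : (2 * (P ^+ 4 - P ^+ 3 - P)) * (1 - a) = 0 by rewrite h.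
    move/eqP; rewrite mulf_eq0 => /orP[|]; first by nra.
    by rewrite subr_eq0 => /eqP.
  have b0 : b = 0 by move: hs; rewrite a1 expr1n => hb; nra.
  by rewrite a1 b0.
- have -> : Nc / Dc - 1 = ((a - 1) * P +i* (b * P)) / Dc.
    apply: (mulIf Dnz); rewrite mulrBl !divfK // mul1r.
    rewrite /Dc /Nc; simpc; apply/eqP; rewrite eq_complex /=.
    by apply/andP; split; apply/eqP; ring.
  have hnum : normc ((a - 1) * P +i* (b * P)) <= 2 * P.
    apply: sqrt_le; first lra.
    have -> : ((a - 1) * P) ^+ 2 + (b * P) ^+ 2 = (2 - 2 * a) * P ^+ 2.
      rewrite !exprMn (_ : b ^+ 2 = 1 - a ^+ 2); last by lra.
      ring.
    nra.
  have Lpos : 0 < (P ^+ 2 - 1) * (P - 1) by nra.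
  rewrite normcM normcV.
  apply: (le_trans (y := 2 * P / ((P ^+ 2 - 1) * (P - 1)))).
    rewrite ler_pdivrMr //.
    apply: (le_trans hnum).
    rewrite -[X in X <= _](@divfK _ ((P ^+ 2 - 1) * (P - 1))); last by rewrite gt_eqF.
    rewrite ler_wpM2l //; apply: divr_ge0; lra.
  have Qpos : 0 < P * (P - 1) by nra.
  rewrite ler_pdivrMr // mulrAC ler_pdivlMr //.
  rewrite -subr_ge0.
  have -> : 4 * ((P ^+ 2 - 1) * (P - 1)) - 2 * P * (P * (P - 1)) =
     (P - 1) * (2 * P ^+ 2 - 4) by ring.
  apply: mulr_ge0; nra.
Qed.
End S.

Section C.
Variable R : realType.
Import Normc.
Variables (d : nat) (chi : nat -> R[i]).
Hypothesis d0 : (0 < d)%N.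
Hypothesis hchi : dirichlet_char d chi.

Lemma chi_per k m : chi (m + k * d)%N = chi m.
Proof.
case: hchi => per _ _; elim: k => [|k IH]; first by rewrite mul0n addn0.
by rewrite mulSn addnCA addnC per IH.
Qed.

Lemma chi_mod m : chi (m %% d)%N = chi m.
Proof. by rewrite {2}(divn_eq m d) addnC chi_per. Qed.

Lemma chi1 : chi 1%N = 1.
Proof.
case: hchi => _ mul nz.
have h1 : chi 1%N != 0 by rewrite nz coprime1n.
by apply: (mulfI h1); rewrite -mul muln1 mulr1.
Qed.

Lemma chiX n k : chi (n ^ k)%N = chi n ^+ k.
Proof.
case: hchi => _ mul _; elim: k => [|k IH]; first by rewrite expn0 expr0 chi1.
by rewrite expnS mul IH exprS.
Qed.

Lemma chi_zero n : ~~ coprime n d -> chi n = 0.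
Proof. by case: hchi => _ _ nz; rewrite -nz negbK => /eqP. Qed.

Lemma chi_unit n : coprime n d -> normc (chi n) = 1.
Proof.
move=> cn.
have e : chi n ^+ totient d = 1.
  by rewrite -chiX -chi_mod Euler_exp_totient // chi_mod chi1.
have : `|chi n| ^+ totient d = 1 by rewrite -normrX e normr1.
move/eqP; rewrite pexpr_eq1 ?totient_gt0 // => /eqP.
by case: (chi n) => x y [].
Qed.

Lemma chi_principal : (forall q, prime q -> chi q != 0 -> chi q = 1) ->
  chi = principal_char R d.
Proof.
case: hchi => _ mul nz => H; apply: funext => n; rewrite /principal_char.
case: ifP => cn; last by apply: chi_zero; rewrite cn.
elim: n {-2}n (leqnn n) cn => [|N IH] n.
  rewrite leqn0 => /eqP ->; rewrite /coprime gcd0n => /eqP d1.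
  by have := chi_per 1 0; rewrite d1 => <-; exact: chi1.
rewrite leq_eqVlt => /orP[/eqP nN|]; last by move=> ?; exact: IH.
move=> cn.
case: (ltnP 1 n) => n1.
  have pp := pdiv_prime n1.
  have pd := pdiv_dvd n.
  rewrite -(divnK pd) mul.
  have cp : coprime (pdiv n) d by apply: coprime_dvdl cn.
  have cq : coprime (n %/ pdiv n) d by apply: coprime_dvdl cn; apply: dvdn_div.
  rewrite (H (pdiv n)%N) //; last by rewrite nz.
  rewrite (IH (n %/ pdiv n)%N) ?mulr1 //.
  by rewrite -ltnS -nN ltn_Pdiv ?prime_gt1 //; lia.
case: n n1 cn nN => [|[|//]] _ cn nN; last by rewrite chi1.
by rewrite nN in cn; lia.
Qed.
End C.

Section M.
Variable R : realType.
Import Normc.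
Variables (d : nat) (chi : nat -> R[i]).
Hypothesis d0 : (0 < d)%N.
Hypothesis hchi : dirichlet_char d chi.

Lemma normc_ge0 (z : R[i]) : (0 : R) <= normc z.
Proof. by case: z => x y; exact: sqrtr_ge0. Qed.

Lemma normCE (z : R[i]) : `|z| = (normc z) +i* 0.
Proof. by case: z. Qed.

Lemma Re_le (z : R[i]) : `|complex.Re z| <= normc z.
Proof.
case: z => x y /=; apply: le_sqrt => //.
by rewrite real_normK ?num_real // lerDl sqr_ge0.
Qed.

Lemma Im_le (z : R[i]) : `|complex.Im z| <= normc z.
Proof.
case: z => x y /=; apply: le_sqrt => //.
by rewrite real_normK ?num_real // lerDr sqr_ge0.
Qed.

Local Notation P := (A_partial chi).

Lemma P_step n : P n.+1 =
  P n * (if prime n && (chi n != 0) then euler_factor chi n else 1).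
Proof. by rewrite /A_partial big_mkcond big_ord_recr /= -big_mkcond. Qed.

Lemma prod_le1 (I : finType) (Q : pred I) (F : I -> R[i]) :
  (forall i, Q i -> normc (F i) <= 1) -> normc (\prod_(i | Q i) F i) <= 1.
Proof.
move=> H; apply: (big_ind (fun x => normc x <= 1)) => //.
- by rewrite normc1.
- move=> x y hx hy; rewrite normcM; apply: mulr_ile1 => //; exact: normc_ge0.
Qed.

Lemma factor_props p : prime p -> chi p != 0 ->
  [/\ normc (euler_factor chi p) <= 1,
      (normc (euler_factor chi p) = 1 -> chi p = 1) &
      normc (euler_factor chi p - 1) <= 4 / ((p%:R : R) * (p%:R - 1))].
Proof.
move=> pp cp; have := @ef_props R (chi p) p (prime_gt1 pp).
case: hchi => _ _ nz; rewrite nz in cp.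
by move=> /(_ (@chi_unit R d chi d0 hchi p cp)).
Qed.

Lemma P_le1 n : normc (P n) <= 1.
Proof. by apply: prod_le1 => i /andP[pp cp]; case: (factor_props _ pp cp). Qed.

Lemma P_cauchy n k : (2 <= n)%N ->
  normc (P (n + k)%N - P n) <= 4 / (n%:R - 1) - 4 / ((n + k)%:R - 1).
Proof.
move=> n2; elim: k => [|k IH].
  by rewrite addn0 subrr normc0 subrr.
rewrite addnS P_step.
set m := (n + k)%N in IH *.
set e := (if _ then _ else _).
have m2 : (2 <= m)%N by rewrite /m; lia.
have M2 : (2 : R) <= m%:R by rewrite (ler_nat R 2 m).
have he : normc (e - 1) <= 4 / ((m%:R : R) * (m%:R - 1)).
  rewrite /e; case: ifP => [/andP[pp cp]|_].
    by case: (factor_props _ pp cp).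
  rewrite subrr normc0; apply: divr_ge0 => //; nra.
have -> : P m * e - P n = (P m - P n) + P m * (e - 1).
  by ring.
apply: (le_trans (le_normcD _ _)).
rewrite normcM.
have : normc (P m) * normc (e - 1) <= 4 / ((m%:R : R) * (m%:R - 1)).
  apply: (le_trans _ he); rewrite ler_piMl ?normc_ge0 //; exact: P_le1.
move=> h2; apply: (le_trans (lerD IH h2)).
have -> : (m.+1%:R : R) - 1 = m%:R by rewrite -natr1 addrK.
have -> : 4 / ((m%:R : R) * (m%:R - 1)) = 4 / (m%:R - 1) - 4 / m%:R.
  field; apply/andP; split; rewrite ?subr_eq0; apply/eqP; nra.
by rewrite addrA subrK.
Qed.
End M.

Section M2.
Variable R : realType.
Import Normc.
Variables (d : nat) (chi : nat -> R[i]).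
Hypothesis d0 : (0 < d)%N.
Hypothesis hchi : dirichlet_char d chi.
Local Notation P := (A_partial chi).

Lemma P_diff n m : (2 <= n)%N -> (n <= m)%N ->
  normc (P m - P n) <= 4 / (n%:R - 1).
Proof.
move=> n2 nm; rewrite -(subnKC nm).
have := @P_cauchy R d chi d0 hchi n (m - n) n2.
have : (0 : R) <= 4 / ((n + (m - n))%:R - 1).
  apply: divr_ge0 => //; rewrite subr_ge0 (ler_nat R 1); lia.
lra.
Qed.

Lemma small_N (e : R) : 0 < e -> exists N, (2 <= N)%N /\ 4 / (N%:R - 1) < e.
Proof.
move=> e0; have h := archi_boundP (ltW (divr_gt0 (ltr0n R 4) e0) : 0 <= 4 / e).
exists (Num.bound (4 / e)).+2; split => //.
have -> : ((Num.bound (4 / e)).+2%:R : R) - 1 = (Num.bound (4 / e)).+1%:R.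
  by rewrite -natr1 addrK.
have B0 : (0 : R) < (Num.bound (4 / e)).+1%:R by rewrite ltr0n.
rewrite ltr_pdivrMr // mulrC -ltr_pdivrMr //.
apply: (lt_le_trans h); rewrite ler_nat; lia.
Qed.

Lemma comp_cvg (f : R[i] -> R) :
  (forall z, `|f z| <= normc z) -> (forall z w, f (z - w) = f z - f w) ->
  cvg ((fun n => f (P n)) @ \oo).
Proof.
move=> fle fB.
apply: cauchy_cvg; apply: cauchy_exP => e e0.
have [N [N2 hN]] := small_N _ e0.
exists (f (P N)); exists N => // n /= Nn.
rewrite -ball_normE /ball_ /= -fB.
apply: (le_lt_trans (fle _)); apply: le_lt_trans hN.
by rewrite -normcN opprB; apply: P_diff.
Qed.


Lemma normc_le (x y : R) : normc (x +i* y) <= `|x| + `|y|.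
Proof.
apply: sqrt_le; first by rewrite addr_ge0.
rewrite sqrrD -[x ^+ 2]real_normK ?num_real // -[y ^+ 2]real_normK ?num_real //.
rewrite -subr_ge0 (_ : _ - _ = `|x| * `|y| *+ 2); last by ring.
by rewrite mulrn_wge0 // mulr_ge0.
Qed.

Lemma P_lim : exists L : R[i],
  forall e : R, 0 < e -> \forall n \near \oo, normc (L - P n) < e.
Proof.
have cu := comp_cvg (@complex.Re R) (@Re_le R) (fun z w => ltac:(by case: z; case: w)).
have cv := comp_cvg (@complex.Im R) (@Im_le R) (fun z w => ltac:(by case: z; case: w)).
move: cu => /cvg_ex [a ua]; move: cv => /cvg_ex [b vb].
exists (a +i* b) => e e0.
have e2 : 0 < e / 2 by rewrite divr_gt0.
move/cvgrPdist_lt: ua => /(_ _ e2) ha; move/cvgrPdist_lt: vb => /(_ _ e2) hb.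
near=> n.
have h1 : `|a - complex.Re (P n)| < e / 2 by near: n.
have h2 : `|b - complex.Im (P n)| < e / 2 by near: n.
have -> : a +i* b - P n = (a - complex.Re (P n)) +i* (b - complex.Im (P n)).
  by case: (P n).
apply: (le_lt_trans (normc_le _ _)); lra.
Unshelve. all: by end_near.
Qed.
End M2.

Import Normc.

Theorem mainTheorem14 (R : realType) (d : nat) (chi : nat -> R[i]) :
  (0 < d)%N -> dirichlet_char d chi ->
  [/\ cvg (A_partial chi @ \oo),
      `|A_chi chi| <= 1,
      (`|A_chi chi| = 1 <-> chi = principal_char R d) &
      (chi = principal_char R d -> A_chi chi = 1)].
Proof.
move=> d0 hchi.
have [L hL] := @P_lim R d chi d0 hchi.
have PL : A_partial chi @ \oo --> L.
  apply/cvgrPdist_lt => eps.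
  case: eps => x y; rewrite ltcE /= => /andP[/eqP y0 x0].
  apply: filterS (hL _ x0) => n hn.
  by rewrite normCE ltcE /= y0 eqxx.
have AL : A_chi chi = L.
  by rewrite /A_chi; apply: cvg_lim => //; apply: norm_hausdorff.
have Lbound : forall r : R, (exists N, forall n, (N <= n)%N ->
    normc (A_partial chi n) <= r) -> normc L <= r.
  move=> r [N hN]; apply/ler_addgt0Pr => e e0.
  have [M _ hM] := hL e e0.
  have h1 := hM (maxn M N) (leq_maxl M N).
  have h2 := hN (maxn M N) (leq_maxr M N).
  have h3 : normc L <= normc (L - A_partial chi (maxn M N)) +
      normc (A_partial chi (maxn M N)).
    by rewrite -{1}(subrK (A_partial chi (maxn M N)) L); apply: le_normcD.
  move: h1 => /= h1; lra.
have L1 : normc L <= 1.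
  by apply: Lbound; exists 0%N => n _; exact: (@P_le1 R d chi d0 hchi).
have prin1 : chi = principal_char R d -> L = 1.
  move=> hp; rewrite -AL /A_chi.
  have -> : A_partial chi = fun _ => 1.
    apply: funext => n; rewrite /A_partial; apply: big1 => i /andP[pp cp].
    have c1 : chi i = 1.
      by move: cp; rewrite hp /principal_char; case: ifP => //; rewrite eqxx.
    by rewrite /euler_factor c1 subrr !mul0r addr0.
  by apply: lim_cst; apply: norm_hausdorff.
have nonprin : forall q, prime q -> chi q != 0 -> chi q != 1 -> normc L < 1.
  move=> q pq cq cq1.
  have [f1 f2 _] := @factor_props R d chi d0 hchi q pq cq.
  have fl : normc (euler_factor chi q) < 1.
    rewrite lt_neqAle f1 andbT; apply/eqP => /f2 /eqP; exact/negP.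
  apply: le_lt_trans fl; apply: Lbound; exists q.+1 => n qn.
  rewrite /A_partial (bigD1 (Ordinal qn)) /=; last by rewrite pq cq.
  rewrite normcM ler_piMr ?normc_ge0 //.
  by apply: prod_le1 => i /andP[/andP[pp cp] _]; case: (@factor_props R d chi d0 hchi _ pp cp).
split.
- by apply/cvg_ex; exists L.
- by rewrite AL normCE lecE /= eqxx.
- split.
    move=> h.
    have hn : normc L = 1 by move: h; rewrite AL normCE => -[].
    have [pr|npr] := pselect (forall q, prime q -> chi q != 0 -> chi q = 1).
      exact: (@chi_principal R d chi d0 hchi).
    exfalso; move/existsNP: npr => [q /not_implyP [pq /not_implyP [cq cq1]]].
    have := nonprin q pq cq (introN eqP cq1); rewrite hn ltxx //.
  by move=> /prin1 h1; rewrite AL h1 normr1.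
- by move=> /prin1; rewrite AL.
Qed.
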